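(* Let $\mathcal{G}$ be a strongly connected digraph with $N$ nodes and consider the distributed quantized weight-balancing algorithm described in the context, with step-size $\gamma(k)=2^{-n}$ for $2^n-1\le k\le 2^{n+1}-2$. If at some iteration $k$ one has $\Vert\boldsymbol{\epsilon}(k)\Vert_1\ge 2N(N-1)\gamma(k)$, then the decreasing event $\mathcal{D}_t$ occurs for some integer $t$ with $k\le t\le k+N^{2N}$.
   Context: $\mathcal{G}=(\mathcal{V},\mathcal{E})$, $\mathcal{V}=\{1,\dots,N\}$, no self-loops; $\mathcal{N}_i^-=\{j:(j,i)\in\mathcal{E}\}$, $\mathcal{N}_i^+=\{j:(i,j)\in\mathcal{E}\}$, $d_i^+=|\mathcal{N}_i^+|$. Algorithm: $a_{ij}(0)=1$ if $j\in\mathcal{N}_i^-$ and $0$ otherwise; $b_i(k)=\sum_{j\in\mathcal{N}_i^-}a_{ij}(k)-\sum_{j\in\mathcal{N}_i^+}a_{ji}(k)$; $n_i(k)=1$ if $b_i(k)\ge d_i^+\gamma(k)$, else $0$; $a_{ij}(k+1)=a_{ij}(k)+n_j(k)\gamma(k)$ for $j\in\mathcal{N}_i^-$. $\boldsymbol{\epsilon}(k)=(|b_i(k)|)_{i=1}^N$. The decreasing event $\mathcal{D}_k$ is: there exist $i\in\mathcal{V}$ and $j\in\mathcal{N}_i^+$ with $n_i(k)>0$ and $b_j(k)<0$. *)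

(* Defs.v *)
From mathcomp Require Import all_boot all_order all_algebra.
Set Implicit Arguments. Unset Strict Implicit. Unset Printing Implicit Defensive.
Import Order.TTheory GRing.Theory Num.Theory.
Local Open Scope ring_scope.

Section Algo.
Variables (R : realFieldType) (N : nat) (e : rel 'I_N).
(* e u v  <->  (u,v) is an edge of the digraph; nodes are 'I_N = {0,..,N-1}. *)

(* step size: gamma(k) = 2^-n  where 2^n - 1 <= k <= 2^(n+1) - 2,
   i.e. n = floor(log2 (k+1)) = trunc_log 2 k.+1 *)
Definition gam (k : nat) : R := (2%:R ^+ trunc_log 2 k.+1)^-1.

Definition outdeg (i : 'I_N) : nat := #|[pred j | e i j]|.

(* a i j = a_ij = weight of edge (j,i), meaningful for j in N_i^- *)
Definition bal (a : 'I_N -> 'I_N -> R) (i : 'I_N) : R :=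
  \sum_(j | e j i) a i j - \sum_(j | e i j) a j i.

Definition nflag (a : 'I_N -> 'I_N -> R) (k : nat) (i : 'I_N) : bool :=
  (outdeg i)%:R * gam k <= bal a i.

Fixpoint wts (k : nat) : 'I_N -> 'I_N -> R :=
  match k with
  | 0 => fun i j => if e j i then 1 else 0
  | k'.+1 => fun i j =>
      if e j i then wts k' i j + (if nflag (wts k') k' j then gam k' else 0)
      else wts k' i j
  end.

Definition b (k : nat) (i : 'I_N) : R := bal (wts k) i.
Definition nn (k : nat) (i : 'I_N) : bool := nflag (wts k) k i.
Definition eps_norm1 (k : nat) : R := \sum_i `|b k i|.

Definition decreasing_event (k : nat) : Prop :=
  exists i j, [/\ e i j, nn k i & b k j < 0].
End Algo.

(* Main.v *)
Require Import Defs.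
From mathcomp Require Import all_boot all_order all_algebra.
From mathcomp Require Import ring lra zify.
From Stdlib Require Classical_Prop.
Import Order.TTheory GRing.Theory Num.Theory.
Local Open Scope ring_scope.

Section Pf.
Variables (R : realFieldType) (N : nat) (e : rel 'I_N).
Local Notation g := (gam R).
Local Notation bb := (b R e).
Local Notation n := (nn R e).
Local Notation d := (outdeg e).

Lemma gam_gt0 t : 0 < g t.
Proof. by rewrite /gam invr_gt0 exprn_gt0 // ltr0n. Qed.

Lemma gam_le s t : (s <= t)%N -> g t <= g s.
Proof.
move=> st; rewrite /gam lef_pV2 ?posrE ?exprn_gt0 ?ltr0n //.
by rewrite ler_eXn2l ?ltr1n // leq_trunc_log.
Qed.

Lemma bal_sum0 (a : 'I_N -> 'I_N -> R) : \sum_i bal e a i = 0.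
Proof.
rewrite /bal sumrB; apply/eqP; rewrite subr_eq0; apply/eqP.
rewrite (exchange_big_dep xpredT) //=.
Qed.

Lemma b_step t i : bb t.+1 i = bb t i + \sum_(j | e j i) (if n t j then g t else 0)
   - (if n t i then (d i)%:R * g t else 0).
Proof.
rewrite /b /bal /=.
rewrite (eq_bigr (fun j => wts R e t i j + (if n t j then g t else 0))); last first.
  by move=> j ->.
rewrite (eq_bigr (fun j => wts R e t j i + (if n t i then g t else 0)) (P := fun j => e i j)); last first.
  by move=> j ->.
rewrite !big_split /=.
have -> : \sum_(j | e i j) (if n t i then g t else 0) = (if n t i then (d i)%:R * g t else 0).
  rewrite (@sumr_const _ _ [pred j | e i j]) /outdeg.
  by case: (n t i); rewrite ?mul0rn // mulr_natl.
rewrite /nn.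
set A := \sum_(_ < N | _) _; set B := \sum_(_ < N | _) _; set C := \sum_(_ < N | _) _.
set D := (if _ then _ else _).
ring.
Qed.
End Pf.
Section Main.
Variables (R : realFieldType) (N : nat) (e : rel 'I_N).
Local Notation g := (gam R).
Local Notation bb := (b R e).
Local Notation n := (nn R e).
Local Notation d := (outdeg e).
Hypothesis N2 : (2 <= N)%N.
Hypothesis irr : irreflexive e.
Variables (k L : nat).
Hypothesis noD : forall m, (m < L)%N -> ~ decreasing_event R e (k + m).

Lemma d_le i : (d i <= N.-1)%N.
Proof.
rewrite /outdeg -[N in (_ <= N.-1)%N]card_ord -(cardC1 i).
apply: subset_leq_card; apply/subsetP => j /=; rewrite !inE => eij.
by apply/eqP => ji; rewrite ji irr in eij.
Qed.

Lemma n_le t i : n t i -> (d i)%:R * g t <= bb t i.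
Proof. by []. Qed.

Lemma not_n t i : ~~ n t i -> bb t i < (d i)%:R * g t.
Proof. by rewrite /nn /nflag -ltNge. Qed.

Lemma neg_not_n t i : bb t i < 0 -> ~~ n t i.
Proof.
move=> h; apply/negP => /n_le h2.
have : 0 <= (d i)%:R * g t by rewrite mulr_ge0 // ltW // gam_gt0.
rewrite /b in h h2 *; lra.
Qed.

Lemma bal_inv m : (m <= L)%N -> forall j,
  (bb k j < 0 -> bb (k + m) j = bb k j) /\ (0 <= bb k j -> 0 <= bb (k + m) j).
Proof.
elim: m => [|m IH] mL j; first by rewrite addn0; split => // /ltW.
have [IH1 IH2] := IH (ltnW mL) j.
rewrite addnS b_step; split.
- move=> hj; have hj' := IH1 hj.
  rewrite big1 ?addr0; last first.
    move=> l elj; case hl: (n (k + m) l) => //; exfalso.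
    case: (noD _ mL); exists l, j; by split => //; rewrite hj'.
  by rewrite (negbTE (neg_not_n _ _ _)) ?subr0 // hj'.
- move=> hj; have hj' := IH2 hj.
  have hs : 0 <= \sum_(l | e l j) (if n (k + m) l then g (k + m) else 0).
    by apply: sumr_ge0 => l _; case: ifP => // _; rewrite ltW // gam_gt0.
  case hn: (n (k + m) j).
  + have := n_le _ _ hn; rewrite /b in hj' hs *; lra.
  + rewrite /b in hj' hs *; lra.
Qed.
End Main.
Section Main2.
Variables (R : realFieldType) (N : nat) (e : rel 'I_N).
Local Notation g := (gam R).
Local Notation bb := (b R e).
Local Notation n := (nn R e).
Local Notation d := (outdeg e).
Hypothesis N2 : (2 <= N)%N.
Hypothesis irr : irreflexive e.
Variables (k L : nat).
Hypothesis noD : forall m, (m < L)%N -> ~ decreasing_event R e (k + m).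
Hypothesis hyp : (2 * N * (N - 1))%:R * g k <= eps_norm1 R e k.

Local Notation Pos := (fun j => ~~ (bb k j < 0)).

Lemma sum_split t : \sum_j bb t j = \sum_(j | bb k j < 0) bb t j + \sum_(j | Pos j) bb t j.
Proof. by rewrite (bigID (fun j => bb k j < 0)). Qed.

Lemma pos_mass m : (m <= L)%N ->
  \sum_(j | Pos j) bb (k + m) j = \sum_(j | Pos j) bb k j.
Proof.
move=> mL.
have h1 := @bal_sum0 R N e (wts R e (k + m)); have h2 := @bal_sum0 R N e (wts R e k).
rewrite -/(b R e (k+m)) in h1.
have e1 : \sum_j bb (k + m) j = 0 by exact: h1.
have e2 : \sum_j bb k j = 0 by exact: h2.
rewrite sum_split in e1; rewrite sum_split in e2.
have e3 : \sum_(j | bb k j < 0) bb (k + m) j = \sum_(j | bb k j < 0) bb k j.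
  by apply: eq_bigr => j hj; case: (@bal_inv R N e k L noD _ mL j) => [+ _]; apply.
rewrite e3 in e1; lra.
Qed.

Lemma eps_eq : eps_norm1 R e k = 2 * \sum_(j | Pos j) bb k j.
Proof.
have e2 : \sum_j bb k j = 0 by exact: (@bal_sum0 R N e (wts R e k)).
rewrite sum_split in e2.
rewrite /eps_norm1 (bigID (fun j => bb k j < 0)) /=.
have -> : \sum_(j | bb k j < 0) `|bb k j| = - \sum_(j | bb k j < 0) bb k j.
  by rewrite -sumrN; apply: eq_bigr => j hj; rewrite ltr0_norm.
have -> : \sum_(j | Pos j) `|bb k j| = \sum_(j | Pos j) bb k j.
  by apply: eq_bigr => j hj; rewrite ger0_norm // leNgt.
rewrite /b in e2 *; lra.
Qed.

Lemma fires m : (m < L)%N -> exists i, n (k + m) i.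
Proof.
move=> mL.
case: (boolP [exists i, n (k + m) i]) => [/existsP//|/existsPn H].
exfalso.
have hN : (0 < N.-1)%N by rewrite -subn1 subn_gt0.
have gk := gam_gt0 R k.
have gt := @gam_le R _ _ (leq_addr m k).
set c := (N.-1)%:R * g k.
have cpos : 0 < c by rewrite mulr_gt0 // ltr0n.
have hyp' : N%:R * c <= \sum_(j | Pos j) bb (k + m) j.
  rewrite pos_mass; last exact: ltnW.
  move: hyp; rewrite eps_eq /c !natrM subn1 => h.
  rewrite /b in h *; lra.
case: (boolP [exists j, Pos j]) => [/existsP [j0 hj0]|/existsPn H2].
- have : \sum_(j | Pos j) bb (k + m) j < \sum_(j | Pos j) c.
    apply: ltr_sum; first by apply/hasP; exists j0; rewrite ?mem_index_enum.
    move=> i _; apply: (lt_le_trans (@not_n R N e _ _ (H i))).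
    rewrite /c; apply: ler_pM; [exact: ler0n | exact: ltW (gam_gt0 _ _) | | exact: gt].
    by rewrite ler_nat (@d_le N e irr).
  rewrite (@sumr_const _ _ [pred j | Pos j]) -mulr_natr => h.
  have : c * #|[pred j | Pos j]|%:R <= c * N%:R.
    apply: ler_wpM2l; first exact: ltW.
    by rewrite ler_nat -[X in (_ <= X)%N]card_ord max_card.
  rewrite [c * N%:R]mulrC => h2.
  have := lt_le_trans (le_lt_trans hyp' h) h2; rewrite ltxx //.
- rewrite big_pred0 in hyp'; last by move=> j; apply/negbTE/H2.
  have : 0 < N%:R * c by rewrite mulr_gt0 // ltr0n; lia.
  lra.
Qed.
End Main2.
Section Main3.
Variables (R : realFieldType) (N : nat) (e : rel 'I_N).
Local Notation g := (gam R).
Local Notation bb := (b R e).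
Local Notation n := (nn R e).
Local Notation d := (outdeg e).
Hypothesis N2 : (2 <= N)%N.
Hypothesis irr : irreflexive e.
Variables (k L : nat).
Hypothesis noD : forall m, (m < L)%N -> ~ decreasing_event R e (k + m).

Definition F x m := count (fun t => n t x) (iota k m).

Lemma F_S x m : F x m.+1 = (F x m + n (k + m) x)%N.
Proof. by rewrite /F -addn1 iotaD count_cat /= addn0. Qed.

Lemma F_neg x u : e x u -> bb k u < 0 -> forall m, (m <= L)%N -> F x m = 0%N.
Proof.
move=> exu hu; elim => [|m IH] mL //.
rewrite F_S IH; last exact: ltnW.
case hx: (n (k + m) x) => //; exfalso.
case: (noD _ mL); exists x, u; split => //.
by case: (@bal_inv R N e k L noD _ (ltnW mL) u) => [+ _] => ->.
Qed.

Lemma F_edge x u : e x u -> 0 <= bb k u -> forall m, (m <= L)%N ->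
  (F x m)%:R <= (2 * N)%:R * (F u m)%:R + Num.min (bb (k + m) u / g (k + m)) N%:R.
Proof.
move=> exu hu m0.
have -> : (2 * N)%:R = (N%:R + N%:R : R) by rewrite mulSn mul1n natrD.
move: m0; elim => [|m IH] mL.
  rewrite /F /= mulr0 add0r le_min ler0n andbT divr_ge0 // ?addn0 //.
  exact: ltW (gam_gt0 _ _).
have {IH} IH := IH (ltnW mL).
have [_ h0] := @bal_inv R N e k L noD _ (ltnW mL) u.
have [_ h1] := @bal_inv R N e k L noD _ mL u.
have {h0} h0 := h0 hu; have {h1} h1 := h1 hu.
rewrite addnS in h1 *.
set t := (k + m)%N in IH h0 h1 *.
have gt0 := gam_gt0 R t; have gt1 := gam_gt0 R t.+1.
have gle := @gam_le R _ _ (leqnSn t).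
set x0 := bb t u / g t in IH *.
set x1 := bb t.+1 u / g t.+1.
have x0p : 0 <= x0 by rewrite divr_ge0 // ltW.
have x1p : 0 <= x1 by rewrite divr_ge0 // ltW.
have hN1 : (1 : R) <= N%:R by rewrite ler1n; lia.
rewrite !F_S !natrD -/t.
set Fx := (F x m)%:R in IH *; set Fu := (F u m)%:R in IH *.
have m0 : Num.min x0 N%:R <= N%:R by rewrite ge_min lexx orbT.
have m1 : 0 <= Num.min x1 N%:R by rewrite le_min x1p ler0n.
case hu': (n t u).
- have hx : ((n t x : nat)%:R : R) <= 1 by case: (n t x).
  rewrite /= mulrDr mulr1.
  rewrite mulrDl in IH *.
  set A := N%:R * Fu in IH *.
  lra.
- have lt1 : x0 + 1 <= N%:R.
    have := @not_n R N e t u (negbT hu').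
    rewrite -/t => h.
    have : x0 < (d u)%:R.
      by rewrite /x0 ltr_pdivrMr.
    have : ((d u)%:R : R) + 1 <= N%:R.
      rewrite natr1 ler_nat; apply: leq_ltn_trans (@d_le N e irr u) _.
      by rewrite ltn_predL (ltnW N2).
    lra.
  have step : x0 + (n t x : nat)%:R <= x1.
    have hb := @b_step R N e t u; rewrite -/t (negbTE (negbT hu')) subr0 in hb.
    have hS : (if n t x then g t else 0) <= \sum_(j | e j u) (if n t j then g t else 0).
      rewrite (bigD1 x) //= lerDl; apply: sumr_ge0 => j _.
      by case: ifP => // _; exact: ltW.
    have hb2 : bb t u + (if n t x then g t else 0) <= bb t.+1 u by rewrite hb lerD2l.
    have : bb t.+1 u / g t <= x1.
      rewrite /x1; apply: ler_wpM2l; first exact: h1.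
      by rewrite lef_pV2 ?posrE.
    have : (bb t u + (if n t x then g t else 0)) / g t = x0 + (n t x : nat)%:R.
      rewrite mulrDl /x0; congr (_ + _).
      by case: (n t x); rewrite ?mul0r // divff // gt_eqF.
    move=> <- hh; apply: le_trans hh.
    apply: ler_wpM2r => //; rewrite invr_ge0; exact: ltW.
  have mx : Num.min x0 N%:R = x0 by apply/min_idPl; lra.
  rewrite mx in IH.
  have : x0 + (n t x : nat)%:R <= Num.min x1 N%:R.
    rewrite le_min step /=.
    have : ((n t x : nat)%:R : R) <= 1 by case: (n t x).
    lra.
  have -> : ((false : nat)%:R : R) = 0 by [].
  rewrite addr0; lra.
Qed.
End Main3.
Section Main4.
Variables (R : realFieldType) (N : nat) (e : rel 'I_N).
Local Notation g := (gam R).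
Local Notation bb := (b R e).
Local Notation n := (nn R e).
Local Notation d := (outdeg e).
Hypothesis N2 : (2 <= N)%N.
Hypothesis irr : irreflexive e.
Variables (k L : nat).
Hypothesis noD : forall m, (m < L)%N -> ~ decreasing_event R e (k + m).
Hypothesis hyp : (2 * N * (N - 1))%:R * g k <= eps_norm1 R e k.
Local Notation FF := (@F R N e k).

Lemma F_negself x : bb k x < 0 -> forall m, (m <= L)%N -> FF x m = 0%N.
Proof.
move=> hx; elim => [|m IH] mL //.
rewrite F_S IH; last exact: ltnW.
have [h _] := @bal_inv R N e k L noD _ (ltnW mL) x.
by rewrite (negbTE (@neg_not_n R N e _ _ _)) // h.
Qed.

Lemma F_edge_nat x u : e x u -> (FF x L <= 2 * N * FF u L + N)%N.
Proof.
move=> exu.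
case: (ltP (bb k u) 0) => hu.
  by rewrite (@F_neg R N e k L noD x u exu hu L (leqnn L)).
have := @F_edge R N e N2 irr k L noD x u exu hu L (leqnn L).
have : Num.min (bb (k + L) u / g (k + L)) N%:R <= N%:R by rewrite ge_min lexx orbT.
move=> h1 h2; have := le_trans h2 (lerD (lexx _) h1).
by rewrite -natrM -natrD ler_nat.
Qed.

Fixpoint cb m := if m is m'.+1 then (2 * N * cb m' + N)%N else 0%N.

Lemma cb_S m : (cb m <= cb m.+1)%N.
Proof. rewrite /=; nia. Qed.

Lemma cb_mono m m' : (m <= m')%N -> (cb m <= cb m')%N.
Proof.
move=> h; rewrite -(subnKC h); elim: (m' - m)%N => [|j IH]; first by rewrite addn0.
by rewrite addnS (leq_trans IH (cb_S _)).
Qed.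

Lemma cb_lt m : (cb m < (2 * N) ^ m)%N.
Proof.
elim: m => [|m IH] //=.
rewrite expnS; set X := ((2 * N) ^ m)%N in IH *; nia.
Qed.

Lemma F_path p x : path e x p -> bb k (last x p) < 0 -> (FF x L <= cb (size p))%N.
Proof.
elim: p x => [|y p IH] x /=.
  by move=> _ hx; rewrite (@F_negself x hx L (leqnn L)).
move=> /andP [exy hp] hl.
have := IH y hp hl; have := @F_edge_nat _ _ exy.
move=> h1 h2; apply: (leq_trans h1); rewrite leq_add2r leq_mul2l; apply/orP; right; exact: h2.
Qed.

Lemma sumF m : (m <= L)%N -> (m <= \sum_i FF i m)%N.
Proof.
elim: m => [|m IH] mL //.
have [i0 hi0] := @fires R N e N2 irr k L noD hyp _ mL.
rewrite (eq_bigr (fun i => FF i m + n (k + m) i)%N); last by move=> i _; rewrite F_S.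
rewrite big_split /= [X in (_ + X)%N](bigD1 i0) //= hi0.
have h := IH (ltnW mL); rewrite add1n addnS ltnS; exact: leq_trans h (leq_addr _ _).
Qed.
End Main4.
Lemma arith_bound N : (2 <= N)%N -> (N * (2 * N) ^ N.-1 <= N ^ (2 * N))%N.
Proof.
move=> N2.
have hp : (0 < N.-1)%N by rewrite -subn1 subn_gt0.
rewrite expnMn mulnCA -expnS prednK ?(ltnW N2) //.
rewrite mul2n -addnn expnD leq_mul2r; apply/orP; right.
apply: (@leq_trans (N ^ N.-1)); first by rewrite leq_exp2r.
by apply: leq_pexp2l; [exact: ltnW | exact: leq_pred].
Qed.

Section Main5.
Variables (R : realFieldType) (N : nat) (e : rel 'I_N).
Local Notation g := (gam R).
Local Notation bb := (b R e).
Local Notation n := (nn R e).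
Hypothesis N2 : (2 <= N)%N.
Hypothesis irr : irreflexive e.
Hypothesis conn : forall i j, connect e i j.
Variables (k L : nat).
Hypothesis noD : forall m, (m < L)%N -> ~ decreasing_event R e (k + m).
Hypothesis hyp : (2 * N * (N - 1))%:R * g k <= eps_norm1 R e k.
Local Notation FF := (@F R N e k).

Lemma exists_neg : exists j0, bb k j0 < 0.
Proof.
case: (boolP [exists j, bb k j < 0]) => [/existsP//|/existsPn H]; exfalso.
have e2 : \sum_j bb k j = 0 by exact: (@bal_sum0 R N e (wts R e k)).
move: hyp; rewrite eps_eq (eq_bigl xpredT) ?e2 ?mulr0; last by move=> j; rewrite /= H.
have hN : (0 < 2 * N * (N - 1))%N by rewrite !muln_gt0 /= subn_gt0 N2 (ltnW N2).
have : 0 < (2 * N * (N - 1))%:R * g k by rewrite mulr_gt0 ?ltr0n // gam_gt0.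
rewrite /b; lra.
Qed.

Lemma F_all i : (FF i L <= cb N N.-1)%N.
Proof.
have [j0 hj0] := exists_neg.
case/connectP: (conn i j0) => p hp ej0; rewrite ej0 in hj0.
move: hj0; case: (shortenP hp) => p' hp' hu _ hl.
have hs : (size (i :: p') <= N)%N.
  by rewrite -(card_uniqP hu) -[X in (_ <= X)%N]card_ord max_card.
apply: leq_trans (@F_path R N e N2 irr k L noD p' i hp' hl) _.
apply: cb_mono; move: hs => /=; lia.
Qed.

Lemma final_contra : L = (N ^ (2 * N))%N -> False.
Proof.
move=> HL.
have h1 := @sumF R N e N2 irr k L noD hyp L (leqnn L).
have h2 : (\sum_i FF i L <= \sum_(i < N) cb N N.-1)%N by apply: leq_sum => i _; exact: F_all.
rewrite sum_nat_const card_ord in h2.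
have h3 := @cb_lt R N e N2 k hyp N.-1.
have h4 := @arith_bound N N2.
have h5 : (N * cb N N.-1 < N * (2 * N) ^ N.-1)%N by rewrite ltn_pmul2l // ltnW.
move: (leq_trans h1 h2) => h6.
have := leq_ltn_trans h6 h5; rewrite HL => h7.
by have := leq_trans h7 h4; rewrite ltnn.
Qed.
End Main5.

Theorem proposition1 (R : realFieldType) (N : nat) (e : rel 'I_N) :
  (2 <= N)%N ->
  irreflexive e ->
  (forall i j, fingraph.connect e i j) ->
  forall k : nat,
    (2 * N * (N - 1))%:R * gam R k <= eps_norm1 R e k ->
    exists t : nat, (k <= t <= k + N ^ (2 * N))%N /\ decreasing_event R e t.
Proof.
move=> N2 irr conn k hyp.
apply: Classical_Prop.NNPP => H.
apply: (@final_contra R N e N2 irr conn k (N ^ (2 * N))%N _ hyp erefl).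
move=> m mL hD; apply: H; exists (k + m)%N; split => //.
by rewrite leq_addr /= leq_add2l ltnW.
Qed.
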